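(* Let $(\Omega,\mathcal{A})$ be a measurable space, $\Theta:=\mathfrak{P}(\Omega)$ the set of all probability measures on it, and let $H_1,\dots,H_K\subseteq\Theta$ ($K\ge2$) be hypotheses with \textit{e}-variables $E_1,\dots,E_K$, where $E_k$ is an \textit{e}-variable for $H_k$. Let $F$ be a symmetric \textit{e}-merging function. For $\theta\in\Theta$ let $I_\theta:=\{k:\theta\in H_k\}$, $E_\theta:=F(E_k:k\in I_\theta)$, and for $R\subseteq\{1,\dots,K\}$ let $g_R(\theta):=|R\setminus I_\theta|$. For $R\subseteq\{1,\dots,K\}$ and $j\in\{1,2,\dots\}$ let \[ D^R(j):=\min_{I\subseteq\{1,\dots,K\}:\ |R\setminus I|<j}F(E_k:k\in I)\quad(\min\emptyset:=\infty), \] a random variable. Then: (a) pointwise on $\Omega$, $D^R(j)\le \inf_{\theta\in\Theta:\ g_R(\theta)<j}E_\theta$ for all $R$ and $j$, with equality for all $R,j$ if the map $\theta\mapsto I_\theta$ from $\Theta$ to the power set of $\{1,\dots,K\}$ is surjective; (b) for every $\theta\in\Theta$ and every $\alpha>0$, \[ Q_\theta\Bigl(\exists R\subseteq\{1,\dots,K\},\ \exists j\ge1:\ g_R(\theta)<j \text{ and } D^R(j)\ge\alpha\Bigr)\le 1/\alpha . \]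
   Context: An \textit{e}-variable for a hypothesis $H\subseteq\Theta$ is a nonnegative extended random variable $E$ with $\int E\,\mathrm{d}\theta\le 1$ for all $\theta\in H$. An \textit{e}-merging function is a Borel function $F:\bigcup_{n=0}^\infty[0,\infty]^n\to[0,\infty]$, increasing in each argument, mapping any finite sequence of \textit{e}-variables (for a fixed probability measure) to an \textit{e}-variable; $F$ of the empty sequence is $1$. It is symmetric if it does not depend on the order of its arguments. Here $Q_\theta=\theta$. *)

(* Defs.v *)
From HB Require Import structures.
From mathcomp Require Import all_boot all_order all_algebra.
From mathcomp Require Import all_classical all_reals all_analysis measurable_realfun.
Set Implicit Arguments.
Unset Strict Implicit.
Unset Printing Implicit Defensive.
Import Order.TTheory GRing.Theory Num.Theory.
Local Open Scope classical_set_scope.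
Local Open Scope ring_scope.
Local Open Scope ereal_scope.

Definition e_variable {d : measure_display} {T : measurableType d}
  {R : realType} (H : set (probability T R)) (E : T -> \bar R) : Prop :=
  [/\ measurable_fun [set: T] E,
      (forall x, 0 <= E x) &
      (forall theta : probability T R, H theta -> \int[theta]_x E x <= 1)].

Definition e_merging {R : realType} (F : seq (\bar R) -> \bar R) : Prop :=
  [/\
      F [::] = 1,
      (forall s : seq (\bar R), all (fun x => 0 <= x) s -> 0 <= F s),
      (* Borel on each [0, +oo]^n (product sigma-algebra on n-tuples) *)
      (forall n : nat,
         measurable_fun [set t : n.-tuple (\bar R) | forall i, 0 <= tnth t i]
                        (fun t => F (tval t))),
      (forall (s : seq (\bar R)) (i : nat) (x y : \bar R),
         all (fun z => 0 <= z) s -> (i < size s)%N -> 0 <= x -> x <= y ->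
         F (set_nth 0 s i x) <= F (set_nth 0 s i y)) &
      (* maps e-variables (for a fixed probability measure, on any
         probability space) to an e-variable *)
      (forall (d' : measure_display) (T' : measurableType d')
              (P : probability T' R) (Es : seq (T' -> \bar R)),
         (forall E, E \in Es -> e_variable [set P] E) ->
         e_variable [set P] (fun w => F [seq E w | E <- Es]))].

Definition symmetric_fun {R : realType} (F : seq (\bar R) -> \bar R) : Prop :=
  forall s t : seq (\bar R), perm_eq s t -> F s = F t.

Definition FI {T : Type} {R : realType} {K : nat} (F : seq (\bar R) -> \bar R)
  (E : 'I_K -> T -> \bar R) (I : {set 'I_K}) (w : T) : \bar R :=
  F [seq E k w | k <- enum I].

Definition Itheta {d : measure_display} {T : measurableType d} {R : realType}
  {K : nat} (H : 'I_K -> set (probability T R)) (theta : probability T R)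
  : {set 'I_K} := [set k | `[< H k theta >] ].

Definition Etheta {d : measure_display} {T : measurableType d} {R : realType}
  {K : nat} (F : seq (\bar R) -> \bar R) (H : 'I_K -> set (probability T R))
  (E : 'I_K -> T -> \bar R) (theta : probability T R) : T -> \bar R :=
  FI F E (Itheta H theta).

Definition gR {d : measure_display} {T : measurableType d} {R : realType}
  {K : nat} (H : 'I_K -> set (probability T R)) (Rs : {set 'I_K})
  (theta : probability T R) : nat := #|Rs :\: Itheta H theta|.

Definition DR {T : Type} {R : realType} {K : nat} (F : seq (\bar R) -> \bar R)
  (E : 'I_K -> T -> \bar R) (Rs : {set 'I_K}) (j : nat) (w : T) : \bar R :=
  \big[mine/+oo]_(I : {set 'I_K} | (#|Rs :\: I| < j)%N) FI F E I w.

(* Main.v *)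
Require Import Defs.
From HB Require Import structures.
From mathcomp Require Import all_boot all_order all_algebra.
From mathcomp Require Import all_classical all_reals all_analysis measurable_realfun.
Import Order.TTheory GRing.Theory Num.Theory.
Local Open Scope classical_set_scope.
Local Open Scope ring_scope.
Local Open Scope ereal_scope.

Lemma meas_ge (d : measure_display) (T : measurableType d) (R : realType)
  (f : T -> \bar R) (a : \bar R) :
  measurable_fun setT f -> measurable [set w | a <= f w].
Proof.
move=> mf.
have := mf measurableT _ (emeasurable_itv (Interval (BLeft a) (BRight +oo%E))).
rewrite setTI; congr measurable; apply/seteqP; split => w /=;
  by rewrite in_itv /= leey andbT.
Qed.

Lemma meas_ex_fin (d : measure_display) (T : measurableType d) (X : finType)
  (Q : X -> set T) : (forall x, measurable (Q x)) ->
  measurable [set w | exists x, Q x w].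
Proof.
move=> mQ.
have H : forall s : seq X, measurable [set w | exists2 x, x \in s & Q x w].
  elim=> [|x s IH].
    by rewrite (_ : [set w | _] = set0) //; apply/seteqP; split => w //= [].
  rewrite (_ : [set w | _] = Q x `|` [set w | exists2 x, x \in s & Q x w]).
    exact: measurableU.
  apply/seteqP; split => w /=.
    by move=> [y]; rewrite inE => /orP [/eqP -> | ys] Qy; [left | right; exists y].
  by move=> [Qx | [y ys Qy]]; [exists x; rewrite ?mem_head | exists y; rewrite // inE ys orbT].
rewrite (_ : [set w | _] = [set w | exists2 x, x \in enum X & Q x w]) //.
apply/seteqP; split => w /= [x Qx]; first by exists x; rewrite ?mem_enum.
by exists x.
Qed.

Lemma meas_all_fin (d : measure_display) (T : measurableType d) (X : finType)
  (Q : X -> set T) : (forall x, measurable (Q x)) ->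
  measurable [set w | forall x, Q x w].
Proof.
move=> mQ.
rewrite (_ : [set w | _] = ~` [set w | exists x, (~` Q x) w]).
  by apply: measurableC; apply: meas_ex_fin => x; apply: measurableC.
apply/seteqP; split => w /=.
  by move=> Hw [x]; apply; apply: Hw.
by move=> Hw x; apply: contrapT => nQ; apply: Hw; exists x.
Qed.

Lemma FI_meas (d : measure_display) (T : measurableType d) (R : realType)
  (K : nat) (E : 'I_K -> T -> \bar R) (F : seq (\bar R) -> \bar R)
  (hF : e_merging F) (mE : forall k, measurable_fun setT (E k))
  (E0 : forall k w, 0 <= E k w) (I : {set 'I_K}) :
  measurable_fun setT (FI F E I).
Proof.
case: hF => _ _ mF _ _.
pose g := fun w => map_tuple (fun k => E k w) (enum_tuple (mem I)).
have -> : FI F E I = (fun t : #|mem I|.-tuple (\bar R) => F (tval t)) \o g by [].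
apply: (measurable_comp _ _ (mF _)).
- apply: meas_all_fin => i.
  exact: meas_ge (measurable_tnth i).
- by move=> _ [w _ <-] i; rewrite tnth_map.
- apply/measurable_fun_tnthP => i.
  rewrite (_ : _ \o g = E (tnth (enum_tuple (mem I)) i)); first exact: mE.
  by apply: funext => w /=; rewrite tnth_map.
Qed.

Theorem mainTheorem2 (d : measure_display) (T : measurableType d) (R : realType)
  (K : nat) (hK : (1 < K)%N)
  (H : 'I_K -> set (probability T R)) (E : 'I_K -> T -> \bar R)
  (hE : forall k, e_variable (H k) (E k))
  (F : seq (\bar R) -> \bar R) (hF : e_merging F) (hFsym : symmetric_fun F) :
  (* (a) *)
  ((forall (Rs : {set 'I_K}) (j : nat), (0 < j)%N -> forall w : T,
      DR F E Rs j w <=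
      ereal_inf [set Etheta F H E theta w |
                  theta in [set theta | (gR H Rs theta < j)%N]]) /\
   ((forall I : {set 'I_K}, exists theta : probability T R, Itheta H theta = I) ->
    forall (Rs : {set 'I_K}) (j : nat), (0 < j)%N -> forall w : T,
      DR F E Rs j w =
      ereal_inf [set Etheta F H E theta w |
                  theta in [set theta | (gR H Rs theta < j)%N]])) /\
  (* (b) *)
  (forall (theta : probability T R) (alpha : R), (0 < alpha)%R ->
     theta [set w | exists (Rs : {set 'I_K}) (j : nat),
                      [/\ (0 < j)%N, (gR H Rs theta < j)%N &
                          alpha%:E <= DR F E Rs j w]]
     <= (alpha^-1)%:E).
Proof.
have mE k : measurable_fun setT (E k) by case: (hE k).
have E0 k w : 0 <= E k w by case: (hE k).
have DRle Rs j w theta : (gR H Rs theta < j)%N ->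
    DR F E Rs j w <= Etheta F H E theta w.
  by move=> hg; rewrite /DR /Etheta; apply: (bigmin_le_cond _ (P := fun I => (#|Rs :\: I| < j)%N)).
have parta : forall (Rs : {set 'I_K}) (j : nat), (0 < j)%N -> forall w : T,
      DR F E Rs j w <=
      ereal_inf [set Etheta F H E theta w |
                  theta in [set theta | (gR H Rs theta < j)%N]].
  move=> Rs j _ w; apply/ereal_infP => _ [theta /= hth <-].
  exact: DRle.
split; [split=> //|].
  move=> surj Rs j j0 w; apply/eqP; rewrite eq_le parta //=.
  rewrite /DR; apply: le_bigmin; first exact: leey.
  move=> I hI; have [theta hth] := surj I.
  apply: ereal_inf_lbound; exists theta; first by rewrite /= /gR hth.
  by rewrite /Etheta hth.
move=> theta alpha alpha0.
pose X := Etheta F H E theta.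
have eX : e_variable [set theta] X.
  case: hF => _ _ _ _ hF5.
  have := hF5 _ _ theta [seq E k | k <- enum (Itheta H theta)].
  have -> : (fun w => F [seq E0 w | E0 <- [seq E k | k <- enum (Itheta H theta)]]) = X.
    by apply: funext => w; rewrite /X /Etheta /FI -map_comp.
  apply => _ /mapP [k kI ->]; split; [exact: mE| exact: E0|].
  move=> th /= ->; case: (hE k) => _ _; apply.
  by move: kI; rewrite mem_enum /Itheta inE => /asboolP.
case: eX => mX X0 iX.
pose B := [set w | alpha%:E <= X w].
have mB : measurable B by apply: meas_ge.
have mA : measurable [set w | exists (Rs : {set 'I_K}) (j : nat),
                      [/\ (0 < j)%N, (gR H Rs theta < j)%N &
                          alpha%:E <= DR F E Rs j w]].
  rewrite (_ : [set w | _] = \bigcup_j [set w | exists Rs : {set 'I_K},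
             ((0 < j)%N && (gR H Rs theta < j)%N) /\ alpha%:E <= DR F E Rs j w]).
    apply: bigcupT_measurable => j; apply: meas_ex_fin => Rs.
    case: ((0 < j)%N && _); last first.
      by rewrite (_ : (fun w : T => _) = set0) //; apply/seteqP; split => w // [].
    rewrite (_ : (fun w : T => _) = [set w | forall I : {set 'I_K},
        (fun I => [set w | (#|Rs :\: I| < j)%N -> alpha%:E <= FI F E I w]) I w]).
      apply: meas_all_fin => I /=; case: (#|Rs :\: I| < j)%N.
        rewrite (_ : (fun w : T => _) = [set w | alpha%:E <= FI F E I w]).
          by apply: meas_ge; apply: FI_meas.
        by apply/seteqP; split => w /=; [apply | move=> ? _].
      by rewrite (_ : (fun w : T => _) = setT) //; apply/seteqP; split => w //.
    apply/seteqP; split => w /=.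
      by move=> [_ /bigmin_geP [_ h]] I; apply: h.
    by move=> h; split => //; apply/bigmin_geP; split; [exact: leey | move=> I; apply: h].
  apply/seteqP; split => w /=.
    by move=> [Rs [j [j0 hg hD]]]; exists j => //; exists Rs; rewrite j0 hg.
  by move=> [j _ [Rs [/andP [j0 hg] hD]]]; exists Rs, j.
have AB : [set w | exists (Rs : {set 'I_K}) (j : nat),
                      [/\ (0 < j)%N, (gR H Rs theta < j)%N &
                          alpha%:E <= DR F E Rs j w]] `<=` B.
  move=> w [Rs [j [_ hg hD]]]; rewrite /B /=.
  exact: le_trans hD (DRle _ _ _ _ hg).
apply: (le_trans (le_measure _ _ _ AB)); rewrite ?inE //.
have mk : alpha%:E * theta B <= 1.
  rewrite -(setIT B) -integral_indic // -integralZl_indic //; last by move=> /ltW; rewrite leNgt alpha0.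
  apply: le_trans (iX theta erefl). apply: ge0_le_integral => //.
  - by move=> x _; rewrite lee_fin mulr_ge0 // ?ltW // indicE ler0n.
  - apply/measurable_EFinP; apply: measurable_funM; first exact: measurable_cst.
    exact: measurable_indic.
  - move=> x _; rewrite indicE; case: (boolP (x \in B)) => xB.
      by rewrite mulr1; move: xB; rewrite inE.
    by rewrite mulr0.
rewrite -[Y in Y <= _]mul1e -(mulVf (lt0r_neq0 alpha0)) EFinM -muleA.
rewrite -[Y in _ <= Y]mule1; apply: lee_wpmul2l => //.
by rewrite lee_fin invr_ge0 ltW.
Qed.
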